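(* Let $n$ be an odd natural number with $n\neq 2^k-1$ for all $k$. Then there exist positive integers $a,b$ such that $a$ and $b$ are odd, $2a+3b=n$, and $$\frac{n\,(a+b-1)!}{a!\,b!}\equiv 1\pmod 2.$$ *)

(* Defs.v *)
From mathcomp Require Import all_boot.

(* Main.v *)
Require Import Defs.
From mathcomp Require Import all_boot.
From mathcomp Require Import zify ring.

Lemma L1 x : forall y, odd 'C(x.*2, y.*2) = odd 'C(x,y) /\ ~~ odd 'C(x.*2, y.*2.+1).
Proof.
elim: x => [|x IH] y.
  by case: y.
case: y => [|y].
  by rewrite bin0 bin0 doubleS bin1 /= odd_double.
have [A1 B1] := IH y.
have [A2 B2] := IH y.+1.
rewrite !doubleS in A2 B2 *.
rewrite !binS !oddD A2 A1 (negbTE B1) (negbTE B2) /=.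
split; first by rewrite addbF.
by rewrite addbF addbb.
Qed.

Lemma L2 x y : odd 'C(x.*2.+1, y.*2) = odd 'C(x,y) /\ odd 'C(x.*2.+1, y.*2.+1) = odd 'C(x,y).
Proof.
split.
  case: y => [|y]; first by rewrite !bin0.
  have [A2 _] := L1 x y.+1. have [_ B1] := L1 x y.
  by rewrite doubleS binS -doubleS oddD A2 (negbTE B1) addbF.
have [A1 B1] := L1 x y.
by rewrite binS oddD A1 (negbTE B1).
Qed.

Lemma L3 j : forall s k, k < 2 ^ j -> odd 'C((2 ^ j * s.+1).-1, k).
Proof.
elim: j => [|j IH] s k hk.
  by move: hk; rewrite expn0; case: k => // _; rewrite bin0.
have hM : 0 < 2 ^ j * s.+1 by rewrite muln_gt0 expn_gt0.
have E : (2 ^ j.+1 * s.+1).-1 = ((2 ^ j * s.+1).-1).*2.+1.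
  by rewrite expnS -mulnA mul2n; case: (2 ^ j * s.+1) hM.
have hk2 : k./2 < 2 ^ j.
  rewrite -(odd_double_half k) expnS in hk. lia.
have [A B] := L2 ((2 ^ j * s.+1).-1) k./2.
rewrite E -(odd_double_half k); case: (odd k) => /=.
  by rewrite B; apply: IH.
by rewrite add0n A; apply: IH.
Qed.

Lemma pow2dec m : 0 < m -> exists j q, odd q /\ m = 2 ^ j * q.
Proof.
elim: m {-2}m (leqnn m) => [|N IH] m hm hm0; first by case: m hm hm0.
case ho: (odd m); first by exists 0, m; rewrite expn0 mul1n.
have E := odd_double_half m. rewrite ho add0n in E.
move: E; set h := m./2 => E. rewrite -E in hm hm0.
have H1 : h <= N by move: hm hm0; rewrite -!mul2n; lia.
have H2 : 0 < h by move: hm0; rewrite -!mul2n; lia.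
have [j [q [hq Eq]]] := IH h H1 H2.
exists j.+1, q; split => //. rewrite expnS -mulnA -Eq. lia.
Qed.

Lemma key a b : (a + b).+1 * (a + b)`! = (a + b).+1`!.
Proof. by rewrite factS. Qed.

Lemma ident a b : (2 * a + 3 * b.+1) * (a + b)`! =
  (a`! * b.+1`!) * (2 * 'C(a + b.+1, a) + 'C(a + b, a)).
Proof.
have F1 := bin_fact (leq_addr b a). rewrite addKn in F1.
have F2 := bin_fact (leq_addr b.+1 a). rewrite addKn in F2.
rewrite mulnDr.
have -> : a`! * b.+1`! * (2 * 'C(a + b.+1, a)) = 2 * (a + b.+1)`!.
  rewrite -F2; ring.
have -> : a`! * b.+1`! * 'C(a + b, a) = b.+1 * (a + b)`!.
  rewrite -F1 factS; ring.
rewrite addnS factS. ring.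
Qed.

Theorem lemma6p5 (n : nat) (hn : odd n) (hk : forall k : nat, n <> 2 ^ k - 1) :
  exists a b : nat,
    0 < a /\ 0 < b /\ odd a /\ odd b /\ 2 * a + 3 * b = n /\
    (a`! * b`!) %| n * (a + b - 1)`! /\
    odd (n * (a + b - 1)`! %/ (a`! * b`!)).
Proof.
have [j [q [hq Eq]]] := @pow2dec n.+1 (ltn0Sn n).
case: j Eq => [|i] Eq.
  by move: hq; rewrite expn0 mul1n in Eq; rewrite -Eq /= hn.
have Hq2 := odd_double_half q. rewrite hq in Hq2.
case Eh: q./2 Hq2 => [|t'] Hq2.
  by exfalso; apply: (hk i.+1); move: Eq; rewrite -Hq2 /= muln1; lia.
have hp : 0 < 2 ^ i by rewrite expn_gt0.
case Ep: (2 ^ i) hp => [|p] // _.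
have E2 : 2 ^ i.+1 = p.*2.+2 by rewrite expnS Ep; lia.
set a := p.*2.+2 * t' + 1.
have Hn : 2 * a + 3 * (p.*2).+1 = n by move: Eq; rewrite E2 -Hq2 /a; lia.
exists a, (p.*2).+1.
have ha : 0 < a by rewrite /a; lia.
have hoa : odd a by rewrite /a addn1 /= oddM /= odd_double.
rewrite subn1 addnS /=.
have Id := ident a p.*2. rewrite Hn in Id. rewrite Id.
do 5 (split; first by [rewrite ?odd_double]).
split; first by apply: dvdn_mulr.
rewrite mulKn; last by rewrite muln_gt0 !fact_gt0.
rewrite oddD oddM /=.
have HN : a + p.*2 = (2 ^ i.+1 * t'.+1).-1 by rewrite E2 /a; lia.
have -> : 'C(a + p.*2, a) = 'C(a + p.*2, a + p.*2 - p.*2) by rewrite addnK.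
rewrite bin_sub ?leq_addl // HN.
apply: L3; rewrite E2; lia.
Qed.
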